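(* For integers $n\ge1$, $m\ge0$, $$\operatorname{Tr}(J_nB_n^{2m})=n\sum_{\pi\in\mathcal{D}_m}w(\pi),$$ where $\mathcal{D}_m$ is the set of Dyck paths of length $2m$ (lattice paths from height $0$ to height $0$ with $m$ up steps $(1,1)$ and $m$ down steps $(1,-1)$, never going below height $0$), and the weight $w(\pi)$ is the product of the weights of its steps: an up step from height $k-1$ to height $k$ has weight $a_{k-1}=\frac{n-k}{2k-1}$ and a down step from height $k$ to height $k-1$ has weight $b_k=\frac{n+k}{2k+1}$ ($k\ge1$). The empty path has weight $1$.
   Context: $J_n$ is the $n\times n$ all-ones matrix, and $B_n=i\,M$ where $M$ is the $n\times n$ matrix with zero diagonal, entries $1$ above and $-1$ below the diagonal. *)

(* Defs.v *)
From HB Require Import structures.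
From mathcomp Require Import all_boot all_order all_algebra.
Set Implicit Arguments. Unset Strict Implicit. Unset Printing Implicit Defensive.
Import Order.TTheory GRing.Theory Num.Theory.
Local Open Scope ring_scope.

Definition Mmat (C : numClosedFieldType) (n : nat) : 'M[C]_n :=
  \matrix_(i < n, j < n) (if (i < j)%N then 1 else if (j < i)%N then -1 else 0).

Definition Bmat (C : numClosedFieldType) (n : nat) : 'M[C]_n := 'i *: Mmat C n.

Definition Jmat (C : numClosedFieldType) (n : nat) : 'M[C]_n := const_mx 1.

(* Lattice paths encoded as seq bool: true = up step (1,1), false = down (1,-1).
   dyck_ok h s: starting from height h, the path never goes below 0 and ends at 0. *)
Fixpoint dyck_ok (h : nat) (s : seq bool) : bool :=
  match s with
  | [::] => h == 0%N
  | true :: s' => dyck_ok h.+1 s'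
  | false :: s' => (0 < h)%N && dyck_ok h.-1 s'
  end.

Definition is_dyck (s : seq bool) : bool := dyck_ok 0 s.

(* a_{k-1} = (n-k)/(2k-1): weight of an up step from height k-1 to k *)
Definition up_w (C : numClosedFieldType) (n k : nat) : C :=
  (n%:R - k%:R) / ((2 * k)%N%:R - 1).
Definition down_w (C : numClosedFieldType) (n k : nat) : C :=
  (n%:R + k%:R) / ((2 * k)%N%:R + 1).

Fixpoint path_w (C : numClosedFieldType) (n h : nat) (s : seq bool) : C :=
  match s with
  | [::] => 1
  | true :: s' => up_w C n h.+1 * path_w C n h.+1 s'
  | false :: s' => down_w C n h * path_w C n h.-1 s'
  end.

Definition dyck_weight (C : numClosedFieldType) (n : nat) (s : seq bool) : C :=
  path_w C n 0 s.

(* Main.v *)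
Require Import Defs.
From HB Require Import structures.
From mathcomp Require Import all_boot all_order all_algebra.
From mathcomp Require Import ring lra.
Set Implicit Arguments. Unset Strict Implicit. Unset Printing Implicit Defensive.
Import Order.TTheory GRing.Theory Num.Theory.
Local Open Scope ring_scope.


Definition ff (C : numClosedFieldType) (y : C) (j : nat) : C := \prod_(i < j) (y - i%:R).
Definition rf (C : numClosedFieldType) (y : C) (j : nat) : C := \prod_(i < j) (y + 1 + i%:R).
Definition PP (C : numClosedFieldType) (y : C) (j : nat) : C := ff y j * rf y j.

Lemma ffSl (C : numClosedFieldType) (z : C) j : ff z j.+1 = z * ff (z - 1) j.
Proof.
rewrite /ff big_ord_recl /= subr0; congr (_ * _); apply: eq_bigr => i _.
rewrite /bump /= add1n; ring.
Qed.
Lemma ffSr (C : numClosedFieldType) (z : C) j : ff z j.+1 = ff z j * (z - j%:R).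
Proof. by rewrite /ff big_ord_recr. Qed.
Lemma rfSl (C : numClosedFieldType) (z : C) j : rf z j.+1 = (z + 1) * rf (z + 1) j.
Proof.
rewrite /rf big_ord_recl /= addr0; congr (_ * _); apply: eq_bigr => i _.
rewrite /bump /= add1n; ring.
Qed.
Lemma rfSr (C : numClosedFieldType) (z : C) j : rf z j.+1 = rf z j * (z + 1 + j%:R).
Proof. by rewrite /rf big_ord_recr. Qed.

Lemma PP_id (C : numClosedFieldType) (n : nat) (y : C) j : (1 <= j)%N ->
 (2 * y + 1) * (2 * j%:R * (n%:R - j%:R) * PP y j.-1 - PP y j) =
 (n%:R - y - 1) * PP (y + 1) j - (n%:R + y) * PP (y - 1) j.
Proof.
case: j => // -[|m] _ /=.
  rewrite /PP /ff /rf !big_ord1 !big_ord0; ring.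
rewrite /PP.
have E1 : ff (y + 1) m.+2 = (y+1) * y * ff (y - 1) m by rewrite ffSl addrK ffSl mulrA.
have E2 : ff y m.+2 = y * ff (y - 1) m * (y - m.+1%:R) by rewrite ffSr ffSl.
have E3 : ff (y - 1) m.+2 = ff (y - 1) m * (y - 1 - m%:R) * (y - 1 - m.+1%:R) by rewrite !ffSr.
have E4 : ff y m.+1 = y * ff (y - 1) m by rewrite ffSl.
have F1 : rf (y + 1) m.+2 = rf (y + 1) m * (y + 1 + 1 + m%:R) * (y + 1 + 1 + m.+1%:R) by rewrite !rfSr.
have F2 : rf y m.+2 = (y + 1) * (rf (y + 1) m * (y + 1 + 1 + m%:R)) by rewrite rfSl rfSr.
have F3 : rf (y - 1) m.+2 = y * ((y + 1) * rf (y + 1) m) by rewrite rfSl subrK rfSl.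
have F4 : rf y m.+1 = (y + 1) * rf (y + 1) m by rewrite rfSl.
rewrite E1 E2 E3 E4 F1 F2 F3 F4.
ring.
Qed.


Definition Dn (C : numClosedFieldType) (n j : nat) : C :=
  \prod_(i < j) (i.+1%:R * (n%:R - 1 - i%:R)).
Definition ee (C : numClosedFieldType) (n k j : nat) : C :=
  (-1) ^+ j * PP (k%:R : C) j / Dn C n j.

Lemma PPS (C : numClosedFieldType) (y : C) j : PP y j.+1 = PP y j * ((y - j%:R) * (y + 1 + j%:R)).
Proof. rewrite /PP ffSr rfSr; ring. Qed.
Lemma PP0 (C : numClosedFieldType) (y : C) : PP y 0 = 1.
Proof. by rewrite /PP /ff /rf !big_ord0 mulr1. Qed.

Lemma eeS (C : numClosedFieldType) n k j : ee C n k j.+1 =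
  ee C n k j * (- ((k%:R - j%:R) * (k%:R + 1 + j%:R))) / (j.+1%:R * (n%:R - 1 - j%:R)).
Proof. rewrite /ee PPS /Dn big_ord_recr /= exprS invfM; ring. Qed.
Lemma ee0 (C : numClosedFieldType) n k : ee C n k 0 = 1.
Proof. by rewrite /ee PP0 /Dn big_ord0 invr1 !mulr1. Qed.

Lemma ff_zero (C : numClosedFieldType) (k j : nat) : (k < j)%N -> ff (k%:R : C) j = 0.
Proof.
elim: j => // j IH; rewrite ltnS leq_eqVlt => /orP [/eqP ->|/IH H].
  by rewrite ffSr subrr mulr0.
by rewrite ffSr H mul0r.
Qed.

Lemma ee_zero (C : numClosedFieldType) n (k j : nat) : (k < j)%N -> ee C n k j = 0.
Proof. by move=> H; rewrite /ee /PP ff_zero // mul0r mulr0 mul0r. Qed.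

Lemma natC_neq0 (C : numClosedFieldType) (m : nat) : (0 < m)%N -> (m%:R : C) != 0.
Proof. by rewrite pnatr_eq0 -lt0n. Qed.

Lemma nsub_neq0 (C : numClosedFieldType) (n j : nat) : (j.+1 < n)%N ->
  (n%:R - 1 - j%:R : C) != 0.
Proof.
move=> H; have -> : (n%:R - 1 - j%:R : C) = (n - j.+1)%:R.
  by rewrite natrB ?(ltnW H) // -natr1; ring.
by apply: natC_neq0; rewrite subn_gt0.
Qed.

Lemma Dn_neq0 (C : numClosedFieldType) (n j : nat) : (j < n)%N -> Dn C n j != 0.
Proof.
rewrite /Dn => H; apply/prodf_neq0 => i _; rewrite mulf_neq0 ?natC_neq0 //.
by apply: nsub_neq0; apply: leq_ltn_trans H.
Qed.

Lemma hockey (C : numClosedFieldType) (N j : nat) :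
  \sum_(0 <= y < N) ('C(y, j)%:R : C) = 'C(N, j.+1)%:R.
Proof.
elim: N => [|N IH]; first by rewrite big_geq // bin0n.
by rewrite big_nat_recr //= IH binS natrD.
Qed.

Definition vv (C : numClosedFieldType) (n k x : nat) : C :=
  \sum_(0 <= j < n) ee C n k j * 'C(x, j)%:R.

Lemma vv_sum (C : numClosedFieldType) (n k N : nat) :
  \sum_(0 <= y < N) vv C n k y = \sum_(0 <= j < n) ee C n k j * 'C(N, j.+1)%:R.
Proof.
rewrite /vv exchange_big /=; apply: eq_bigr => j _.
by rewrite -big_distrr /= hockey.
Qed.

Lemma tele (C : numClosedFieldType) (n k m : nat) : (1 <= k)%N -> (m < n)%N ->
  \sum_(0 <= j < m.+1) ee C n k j * ('C(n, j.+1)%:R : C) =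
  ee C n k m * 'C(n, m.+1)%:R * (k%:R * (k%:R + 1) - m%:R * (m%:R + 1)) / (k%:R * (k%:R + 1)).
Proof.
move=> hk; have hq1 : (k%:R : C) != 0 by rewrite natC_neq0.
have hq2 : (k%:R + 1 : C) != 0 by rewrite natr1 natC_neq0.
elim: m => [|m IH] hm.
  rewrite big_nat1 ee0; field; by rewrite hq1 hq2.
rewrite big_nat_recr //= IH ?(ltnW hm) // eeS.
have hb : ('C(n, m.+2)%:R : C) = 'C(n, m.+1)%:R * (n%:R - 1 - m%:R) / m.+2%:R.
  apply: (mulIf (natC_neq0 C (ltn0Sn m.+1))).
  rewrite mulfVK ?natC_neq0 // -natrM mulnC mul_bin_left natrM natrB ?(ltnW hm) //.
  rewrite -natr1; ring.
rewrite hb.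
have h1 := nsub_neq0 C hm.
have h2 := natC_neq0 C (ltn0Sn m).
have h3 := natC_neq0 C (ltn0Sn m.+1).
rewrite -!natr1 in h2 h3 *.
field.
by rewrite h1 h2 h3 hq1 hq2.
Qed.

Lemma vv_sum0 (C : numClosedFieldType) (n k : nat) : (1 <= k)%N -> (k < n)%N ->
  \sum_(0 <= y < n) vv C n k y = 0.
Proof.
move=> hk hkn; rewrite vv_sum.
case: n hkn => [//|n'] hkn.
rewrite tele //.
case: (ltngtP k n') => [lt|gt|->].
- by rewrite ee_zero // !mul0r.
- by rewrite ltnS leqNgt gt in hkn.
- by rewrite subrr mulr0 mul0r.
Qed.


Lemma coef_id (C : numClosedFieldType) (n h j : nat) : (1 <= h)%N -> (j < n)%N ->
  - (2 * (if j is j'.+1 then ee C n h j' else 0) + ee C n h j) =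
  up_w C n h.+1 * ee C n h.+1 j - down_w C n h * ee C n h.-1 j.
Proof.
case: h => // h' _.
have hy : (2 * (h'%:R + 1) + 1 : C) != 0.
  have -> : (2 * (h'%:R + 1) + 1 : C) = (2 * h'.+1).+1%:R.
    by ring.
  exact: natC_neq0.
case: j => [|j'] hj /=.
  rewrite !ee0 /up_w /down_w; field. by rewrite (addrC 1).
have key := PP_id n (h'%:R + 1 : C) (ltn0Sn j'); rewrite addrK /= in key.
have c1 : (h'.+2%:R : C) = h'%:R + 1 + 1 by ring.
have c2 : (h'.+1%:R : C) = h'%:R + 1 by ring.
have hD := Dn_neq0 C (ltnW hj).
have hd1 := natC_neq0 C (ltn0Sn j').
have hd2 := nsub_neq0 C hj.
rewrite /ee c1 c2 /Dn big_ord_recr /= -/(Dn C n j') !exprS /up_w /down_w.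
apply/eqP; rewrite -subr_eq0; apply/eqP.
set c := - (-1) ^+ j' / (Dn C n j' * (j'.+1%:R * (n%:R - 1 - j'%:R)) * (2 * (h'%:R + 1) + 1)).
transitivity (c * ((2 * (h'%:R + 1) + 1) * (2 * j'.+1%:R * (n%:R - j'.+1%:R) * PP (h'%:R + 1) j' - PP (h'%:R + 1) j'.+1) -
   ((n%:R - (h'%:R + 1) - 1) * PP (h'%:R + 1 + 1) j'.+1 - (n%:R + (h'%:R + 1)) * PP h'%:R j'.+1))).
  rewrite /c; field; by rewrite hy hd2 hD nat1r hd1.
by rewrite key subrr mulr0.
Qed.


Definition msign (C : numClosedFieldType) (x y : nat) : C :=
  if (x < y)%N then 1 else if (y < x)%N then -1 else 0.

Lemma Mact (C : numClosedFieldType) (n k x : nat) : (x < n)%N ->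
  \sum_(0 <= y < n) msign C x y * vv C n k y =
  \sum_(0 <= y < n) vv C n k y -
  \sum_(0 <= j < n) ee C n k j * (2 * 'C(x, j.+1)%:R + 'C(x, j)%:R).
Proof.
move=> hx.
have split1 : forall F : nat -> C, \sum_(0 <= y < n) F y =
   \sum_(0 <= y < x) F y + (F x + \sum_(x.+1 <= y < n) F y).
  by move=> F; rewrite (@big_cat_nat _ _ _ x) /= ?(ltnW hx) // (@big_ltn _ _ _ x n).
rewrite [LHS]split1.
have -> : \sum_(0 <= y < x) msign C x y * vv C n k y = - \sum_(0 <= y < x) vv C n k y.
  rewrite -sumrN big_nat_cond [RHS]big_nat_cond; apply: eq_bigr => y /andP [/andP [_ hy] _].
  by rewrite /msign ltnNge (ltnW hy) /= hy mulN1r.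
have -> : msign C x x = 0 by rewrite /msign ltnn.
have -> : \sum_(x.+1 <= y < n) msign C x y * vv C n k y = \sum_(x.+1 <= y < n) vv C n k y.
  rewrite big_nat_cond [RHS]big_nat_cond; apply: eq_bigr => y /andP [/andP [hy _] _].
  by rewrite /msign hy mul1r.
have hS : vv C n k x = \sum_(0 <= y < x.+1) vv C n k y - \sum_(0 <= y < x) vv C n k y.
  by rewrite big_nat_recr //= addrAC subrr add0r.
have hT : \sum_(x.+1 <= y < n) vv C n k y = \sum_(0 <= y < n) vv C n k y - \sum_(0 <= y < x.+1) vv C n k y.
  by rewrite (@big_cat_nat _ _ _ x.+1 0 n) //= addrC addrK.
rewrite hT hS !vv_sum.
have -> : \sum_(0 <= j < n) ee C n k j * (2 * 'C(x, j.+1)%:R + 'C(x, j)%:R) =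
  \sum_(0 <= j < n) ee C n k j * 'C(x, j.+1)%:R + \sum_(0 <= j < n) ee C n k j * 'C(x.+1, j.+1)%:R.
  rewrite -big_split /=; apply: eq_bigr => j _; rewrite binS natrD; ring.
ring.
Qed.

Lemma shift_sum (C : numClosedFieldType) (n x : nat) (e : nat -> C) : (x < n)%N ->
  \sum_(0 <= j < n) e j * 'C(x, j.+1)%:R =
  \sum_(0 <= j < n) (if j is j'.+1 then e j' else 0) * 'C(x, j)%:R.
Proof.
case: n => // n hx.
rewrite big_nat_recr //= bin_small // mulr0 addr0 big_nat_recl //= mul0r add0r.
by [].
Qed.

Lemma shift_sum2 (C : numClosedFieldType) (n x : nat) (e : nat -> C) : (x < n)%N ->
  \sum_(0 <= j < n) e j * (2 * 'C(x, j.+1)%:R + 'C(x, j)%:R) =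
  \sum_(0 <= j < n) (2 * (if j is j'.+1 then e j' else 0) + e j) * 'C(x, j)%:R.
Proof.
move=> hx.
have -> : \sum_(0 <= j < n) e j * (2 * 'C(x, j.+1)%:R + 'C(x, j)%:R) =
   2 * \sum_(0 <= j < n) e j * 'C(x, j.+1)%:R + \sum_(0 <= j < n) e j * 'C(x, j)%:R.
  rewrite big_distrr -big_split /=; apply: eq_bigr => j _; ring.
rewrite shift_sum // big_distrr -big_split /=; apply: eq_bigr => j _; ring.
Qed.

Lemma Mrel (C : numClosedFieldType) (n h x : nat) : (1 <= h)%N -> (h < n)%N -> (x < n)%N ->
  \sum_(0 <= y < n) msign C x y * vv C n h y =
  up_w C n h.+1 * vv C n h.+1 x - down_w C n h * vv C n h.-1 x.
Proof.
move=> h1 hn hx; rewrite Mact // vv_sum0 // sub0r /vv shift_sum2 //.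
rewrite !big_distrr -sumrB -sumrN big_nat_cond [RHS]big_nat_cond.
apply: eq_bigr => j /andP [/andP [_ hj] _].
have E := coef_id C h1 hj; rewrite -mulNr E /=; ring.
Qed.

Lemma vv0 (C : numClosedFieldType) (n y : nat) : (0 < n)%N -> vv C n 0 y = 1.
Proof.
move=> hn; rewrite /vv big_ltn // ee0 bin0 mul1r big1_seq ?addr0 //.
by move=> j /andP [_]; rewrite mem_iota => /andP [hj _]; rewrite ee_zero // mul0r.
Qed.

Lemma Mrel0 (C : numClosedFieldType) (n x : nat) : (x < n)%N ->
  \sum_(0 <= y < n) msign C x y * vv C n 0 y = up_w C n 1 * vv C n 1 x.
Proof.
move=> hx; have hn : (0 < n)%N by apply: leq_ltn_trans hx.
rewrite Mact // (eq_bigr (fun _ => 1)) => [|y _]; last by rewrite vv0.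
rewrite sumr_const_nat subn0.
rewrite big_ltn // ee0 big1_seq => [|j]; last first.
  by move=> /andP [_]; rewrite mem_iota => /andP [hj _]; rewrite ee_zero // mul0r.
rewrite addr0 mul1r bin0 /vv.
case: n hx hn => // -[|n] hx _.
  rewrite big_nat1 ee0 /up_w; move: hx; rewrite ltnS leqn0 => /eqP ->.
  rewrite bin0 bin_small //; ring.
rewrite big_ltn // big_ltn // ee0 big1_seq => [|j]; last first.
  by move=> /andP [_]; rewrite mem_iota => /andP [hj _]; rewrite ee_zero // mul0r.
rewrite eeS ee0 bin0 bin1 /up_w.
field.
have -> : (2 + n%:R - 1 : C) = n.+1%:R by ring.
exact: natC_neq0.
Qed.


Lemma tuple_split (T : finType) (R : nmodType) (j : nat) (G : seq T -> R) :
  \sum_(t : j.+1.-tuple T) G t = \sum_(b : T) \sum_(t : j.-tuple T) G (b :: t).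
Proof.
rewrite pair_big /=.
rewrite (reindex (fun p : T * j.-tuple T => [tuple of p.1 :: p.2])) //=.
exists (fun t : j.+1.-tuple T => (thead t, [tuple of behead t])) => [[b t] _|t _] /=.
  by congr (_, _); apply: val_inj.
by rewrite [RHS]tuple_eta.
Qed.

Definition Dsum (C : numClosedFieldType) (n j h : nat) : C :=
  \sum_(t : j.-tuple bool | dyck_ok h t) path_w C n h t.

Lemma DsumS (C : numClosedFieldType) (n j h : nat) :
  Dsum C n j.+1 h = up_w C n h.+1 * Dsum C n j h.+1 +
    (if (0 < h)%N then down_w C n h * Dsum C n j h.-1 else 0).
Proof.
rewrite /Dsum big_mkcond (tuple_split _ (fun s => if dyck_ok h s then path_w C n h s else 0)) big_bool /=.
rewrite !big_distrr /= [in RHS]big_mkcond /=; congr (_ + _).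
case: (0 < h)%N => /=; last by rewrite big1.
by rewrite [in RHS]big_mkcond.
Qed.


Definition wv (C : numClosedFieldType) (n h : nat) : 'cV[C]_n :=
  \col_(i < n) ('i ^+ h * vv C n h i).
Definition sumv (C : numClosedFieldType) (n : nat) (w : 'cV[C]_n) : C :=
  \sum_(i < n) w i 0.

Lemma Bw (C : numClosedFieldType) (n h : nat) : (h < n)%N ->
  Bmat C n *m wv C n h = up_w C n h.+1 *: wv C n h.+1 +
    (if (0 < h)%N then down_w C n h *: wv C n h.-1 else 0).
Proof.
move=> hn; apply/matrixP => x z; rewrite !mxE.
have -> : \sum_(y < n) Bmat C n x y * wv C n h y z =
    'i ^+ h.+1 * \sum_(0 <= y < n) msign C x y * vv C n h y.
  rewrite big_mkord big_distrr; apply: eq_bigr => y _.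
  rewrite /Bmat /Mmat /wv !mxE /msign exprS /=; ring.
case: h hn => [|h'] hn /=.
  by rewrite Mrel0 // !mxE addr0 /= mulrCA.
rewrite Mrel //= !mxE.
have ii : ('i ^+ h'.+2 : C) = - 'i ^+ h' by rewrite !exprS mulrA mulCii mulN1r.
rewrite ii; ring.
Qed.

Lemma sumvD (C : numClosedFieldType) (n : nat) (u w : 'cV[C]_n) : sumv (u + w) = sumv u + sumv w.
Proof. by rewrite /sumv -big_split; apply: eq_bigr => i _; rewrite mxE. Qed.
Lemma sumvZ (C : numClosedFieldType) (n : nat) a (u : 'cV[C]_n) : sumv (a *: u) = a * sumv u.
Proof. by rewrite /sumv big_distrr; apply: eq_bigr => i _; rewrite mxE. Qed.
Lemma sumv0 (C : numClosedFieldType) (n : nat) : sumv (0 : 'cV[C]_n) = 0.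
Proof. by rewrite /sumv big1 // => i _; rewrite mxE. Qed.

Lemma sumv_w (C : numClosedFieldType) (n h : nat) : (h < n)%N ->
  sumv (wv C n h) = if h == 0%N then n%:R else 0.
Proof.
move=> hn; rewrite /sumv (eq_bigr (fun i : 'I_n => 'i ^+ h * vv C n h i)) => [|i _]; last by rewrite mxE.
rewrite -big_distrr /= -(big_mkord xpredT (vv C n h)).
case: h hn => [|h] hn /=.
  rewrite (eq_bigr (fun _ => 1)) => [|y _]; last by rewrite vv0.
  by rewrite sumr_const_nat subn0 expr0 mul1r.
by rewrite vv_sum0 // mulr0.
Qed.

Lemma mainlem (C : numClosedFieldType) (n j : nat) : forall h, (h < n)%N ->
  sumv (Bmat C n ^+ j *m wv C n h) = n%:R * Dsum C n j h.
Proof.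
elim: j => [|j IH] h hn.
  rewrite expr0 mul1mx sumv_w // /Dsum.
  have E : forall F : 0.-tuple bool -> C, \sum_t F t = F [tuple].
    by move=> F; rewrite (big_pred1 [tuple]) // => t; apply/esym/eqP; apply: tuple0.
  rewrite big_mkcond E /=.
  by case: h hn => [|h] hn /=; rewrite ?mulr1 ?mulr0.
rewrite exprSr -mulmxA Bw // mulmxDr -!scalemxAr sumvD sumvZ DsumS mulrDr.
congr (_ + _).
  case: (ltnP h.+1 n) => hn1; first by rewrite IH //; ring.
  have -> : h.+1 = n by apply/eqP; rewrite eqn_leq hn1 hn.
  by rewrite /up_w subrr !mul0r mulr0.
case: (0 < h)%N; last by rewrite mulmx0 sumv0 mulr0.
rewrite -scalemxAr sumvZ IH; first ring.
by apply: leq_ltn_trans hn; apply: leq_pred.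
Qed.

Lemma wv0 (C : numClosedFieldType) (n : nat) : (0 < n)%N -> wv C n 0 = const_mx 1.
Proof. by move=> hn; apply/matrixP => i j; rewrite !mxE vv0 // mulr1. Qed.

Unset Implicit Arguments.
Theorem theorem5p2 (C : numClosedFieldType) (n m : nat) (hn : (1 <= n)%N) :
  \tr (Jmat C n *m Bmat C n ^+ (2 * m)) =
  n%:R * \sum_(t : (2 * m).-tuple bool | is_dyck t) dyck_weight C n t.
Proof.
have := mainlem C (2 * m) hn; rewrite /Dsum => <-.
rewrite wv0 // /sumv /mxtrace /Jmat.
rewrite (eq_bigr (fun i : 'I_n => \sum_(l < n) (Bmat C n ^+ (2 * m)) l i)) => [|i _]; last first.
  by rewrite !mxE; apply: eq_bigr => l _; rewrite mxE mul1r.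
rewrite exchange_big /=; apply: eq_bigr => l _; rewrite mxE.
by apply: eq_bigr => i _; rewrite mxE mulr1.
Qed.
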